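(* Let $N\ge1$ be an integer and $\beta,\gamma,\xi,\eta,D,R>0$. Define, for $z>0$, $$\bar C(z)=\frac{\gamma\xi R^2\,e^{-\frac{R^2}{4zD}-\eta z}}{8z^2D^2},\qquad g(t)=N\int_0^t\bar C(t-\tau)\,d\tau,$$ and consider the planar linear nonautonomous system in $\mathbf{y}=(V,X)\in\mathbb{R}^2$ $$\dot V=-\beta V-g(t)X,\qquad \dot X=V.$$ Fix $\bar t>0$. Then the system admits a Lyapunov function $U(t,\mathbf{y})$ and positive constants $k_1,k_2,k_3$ such that, for all $t\ge\bar t$ and all $\mathbf{y}\in\mathbb{R}^2$, (a) $k_2\|\mathbf{y}\|^2\le U(t,\mathbf{y})\le k_1\|\mathbf{y}\|^2$; (b) $\dot U(t,\mathbf{y})=\frac{\partial U}{\partial t}+\frac{\partial U}{\partial V}\dot V+\frac{\partial U}{\partial X}\dot X\le -k_3\|\mathbf{y}\|^2$, where $\dot V,\dot X$ are given by the system.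
   Context: This planar system is the linearization, written in centre-of-mass variables for each particle and each coordinate, of a hybrid model of $N$ particles in $\mathbb{R}^2$ with Cucker–Smale alignment (strength $\beta$) and chemotaxis towards a signal diffusing with coefficient $D$, degrading at rate $\eta$, produced at rate $\xi$ on discs of radius $R$, with chemotactic sensitivity $\gamma$. $\|\cdot\|$ is the Euclidean norm. *)

(* Defs.v *)
From Stdlib Require Import Reals Lra.
From Coquelicot Require Import Coquelicot.
Open Scope R_scope.

(* Cbar(z) = gamma xi Rd^2 exp(-Rd^2/(4 z D) - eta z) / (8 z^2 D^2) for z > 0;
   extended by 0 for z <= 0 (its continuous extension at 0). *)
Definition Cbar (gamma xi eta D Rd : R) (z : R) : R :=
  if Rlt_dec 0 z then
    gamma * xi * Rd ^ 2 * exp (- Rd ^ 2 / (4 * z * D) - eta * z) / (8 * z ^ 2 * D ^ 2)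
  else 0.

Definition gfun (N : nat) (gamma xi eta D Rd : R) (t : R) : R :=
  INR N * RInt (fun tau => Cbar gamma xi eta D Rd (t - tau)) 0 t.

(* Main.v *)
Require Import Defs.
From Stdlib Require Import Reals Lra.
From Coquelicot Require Import Coquelicot.
Open Scope R_scope.

Lemma exp_cube u : 0 <= u -> u^3 <= 27 * exp u.
Proof.
  intros Hu.
  assert (He : exp u = exp (u/3) ^ 3).
  { simpl. rewrite Rmult_1_r, <- !exp_plus. f_equal. field. }
  rewrite He. pose proof (exp_ineq1_le (u/3)).
  assert (0 <= u/3) by lra.
  assert ((u/3)^3 <= exp (u/3) ^3) by (apply pow_incr; lra).
  replace (u^3) with (27 * (u/3)^3) by field. lra.
Qed.

Lemma Cbar_bound gamma xi eta D Rd z : 0 < gamma -> 0 < xi -> 0 < eta -> 0 < D -> 0 < Rd ->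
  0 < z -> 0 <= Cbar gamma xi eta D Rd z <= 216 * gamma * xi * D / Rd ^ 4 * z.
Proof.
  intros Hg Hx He HD HR Hz. unfold Cbar. destruct (Rlt_dec 0 z) as [_|]; [|lra].
  set (u := Rd^2/(4*z*D)).
  assert (Hu : 0 < u) by (unfold u; apply Rdiv_lt_0_compat; [nra| nra]).
  assert (HE : exp (- Rd ^ 2 / (4 * z * D) - eta * z) <= 1728 * z^3 * D^3 / Rd^6).
  { replace (- Rd ^ 2 / (4 * z * D) - eta * z) with (- u + - (eta*z)) by (unfold u; field; lra).
    rewrite exp_plus, !exp_Ropp.
    pose proof (exp_cube u (Rlt_le _ _ Hu)).
    assert (0 < exp u) by apply exp_pos.
    assert (0 < exp (eta*z)) by apply exp_pos.
    assert (1 <= exp (eta*z)) by (pose proof (exp_ineq1_le (eta*z)); nra).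
    assert (/ exp (eta*z) <= 1).
    { rewrite <- Rinv_1. apply Rinv_le_contravar; lra. }
    assert (/ exp u <= 27 / u^3).
    { apply (Rmult_le_reg_l (exp u * u^3)). apply Rmult_lt_0_compat; [lra| apply pow_lt; lra].
      field_simplify; try lra. }
    assert (27 / u^3 = 1728 * z^3 * D^3 / Rd^6) by (unfold u; field; lra).
    assert (0 < / exp u) by (apply Rinv_0_lt_compat; lra).
    assert (0 < / exp (eta*z)) by (apply Rinv_0_lt_compat; lra).
    nra. }
  assert (Hpos : 0 < exp (- Rd ^ 2 / (4 * z * D) - eta * z)) by apply exp_pos.
  split.
  - apply Rlt_le. apply Rdiv_lt_0_compat. repeat apply Rmult_lt_0_compat; try lra; apply pow_lt; lra.
    repeat apply Rmult_lt_0_compat; try lra; apply pow_lt; lra.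
  - replace (gamma * xi * Rd ^ 2 * exp (- Rd ^ 2 / (4 * z * D) - eta * z) / (8 * z ^ 2 * D ^ 2))
      with ((gamma * xi * Rd ^ 2 / (8 * z ^ 2 * D ^ 2)) * exp (- Rd ^ 2 / (4 * z * D) - eta * z)) by (field; lra).
    replace (216 * gamma * xi * D / Rd ^ 4 * z) with ((gamma * xi * Rd ^ 2 / (8 * z ^ 2 * D ^ 2)) * (1728 * z^3 * D^3 / Rd^6)) by (field; lra).
    apply Rmult_le_compat_l; [|exact HE].
    apply Rlt_le, Rdiv_lt_0_compat. repeat apply Rmult_lt_0_compat; try lra; apply pow_lt; lra.
    repeat apply Rmult_lt_0_compat; try lra; apply pow_lt; lra.
Qed.

Lemma Cbar_cont gamma xi eta D Rd z : 0 < gamma -> 0 < xi -> 0 < eta -> 0 < D -> 0 < Rd ->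
  continuous (Cbar gamma xi eta D Rd) z.
Proof.
  intros Hg Hx He HD HR.
  destruct (Rlt_le_dec 0 z) as [Hz|Hz].
  - apply continuous_ext_loc with
      (g := fun z => gamma * xi * Rd ^ 2 * exp (- Rd ^ 2 / (4 * z * D) - eta * z) / (8 * z ^ 2 * D ^ 2)).
    + exists (mkposreal z Hz). intros y Hy. unfold Cbar.
      destruct (Rlt_dec 0 y) as [|n]; [reflexivity|].
      exfalso. apply n. unfold ball in Hy; simpl in Hy; unfold AbsRing_ball, abs, minus, plus, opp in Hy; simpl in Hy.
      apply Rabs_lt_between in Hy. lra.
    + apply (ex_derive_continuous (K:=R_AbsRing) (V:=R_NormedModule)). auto_derive. assert (0 < 4*z*D) by (apply Rmult_lt_0_compat; nra).
      assert (0 < 8 * (z * (z * 1)) * (D * (D * 1))) by (repeat apply Rmult_lt_0_compat; lra).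
      repeat split; lra.
  - destruct (Rle_lt_or_eq_dec _ _ Hz) as [Hz1|Hz1].
    + apply continuous_ext_loc with (g := fun _ => 0).
      * assert (Hz' : 0 < -z) by lra.
        exists (mkposreal (-z) Hz'). intros y Hy. unfold Cbar.
        destruct (Rlt_dec 0 y) as [Hy'|]; [|reflexivity].
        exfalso. unfold ball in Hy; simpl in Hy; unfold AbsRing_ball, abs, minus, plus, opp in Hy; simpl in Hy.
        apply Rabs_lt_between in Hy. lra.
      * apply continuous_const.
    + subst z. apply continuity_pt_filterlim.
      set (K := 216 * gamma * xi * D / Rd ^ 4).
      assert (HK : 0 < K).
      { unfold K. apply Rdiv_lt_0_compat; [repeat apply Rmult_lt_0_compat; lra| apply pow_lt; lra]. }
      intros eps Heps. exists (eps / K). split. apply Rdiv_lt_0_compat; lra.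
      intros x [_ Hxd]. simpl in *. unfold R_dist in *.
      assert (C0 : Cbar gamma xi eta D Rd 0 = 0).
      { unfold Cbar. destruct (Rlt_dec 0 0); [lra|reflexivity]. }
      rewrite C0. rewrite Rminus_0_r in *.
      destruct (Rlt_dec 0 x) as [Hxp|Hxn].
      * destruct (Cbar_bound gamma xi eta D Rd x Hg Hx He HD HR Hxp) as [B1 B2].
        rewrite Rabs_pos_eq by lra. rewrite Rabs_pos_eq in Hxd by lra.
        apply Rle_lt_trans with (K*x). exact B2.
        apply (Rmult_lt_compat_l K) in Hxd; [|lra].
        replace (K * (eps/K)) with eps in Hxd by (field; lra). lra.
      * unfold Cbar. destruct (Rlt_dec 0 x); [contradiction|]. rewrite Rabs_R0. lra.
Qed.

Lemma Cbar_ex gamma xi eta D Rd a b : 0 < gamma -> 0 < xi -> 0 < eta -> 0 < D -> 0 < Rd ->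
  ex_RInt (Cbar gamma xi eta D Rd) a b.
Proof. intros. apply (ex_RInt_continuous (V:=R_CompleteNormedModule)). intros. apply Cbar_cont; auto. Qed.

Lemma gfun_eq N gamma xi eta D Rd t : 0 < gamma -> 0 < xi -> 0 < eta -> 0 < D -> 0 < Rd ->
  gfun N gamma xi eta D Rd t = INR N * RInt (Cbar gamma xi eta D Rd) 0 t.
Proof.
  intros. unfold gfun. f_equal. apply (is_RInt_unique (V:=R_CompleteNormedModule)).
  set (f := Cbar gamma xi eta D Rd).
  assert (HH1 : is_RInt f 0 t (RInt f 0 t)) by (apply (RInt_correct (V:=R_CompleteNormedModule)), Cbar_ex; auto).
  apply is_RInt_swap in HH1.
  assert (HH2 : is_RInt f (-1 * 0 + t) (-1 * t + t) (opp (RInt f 0 t))).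
  { replace (-1 * 0 + t) with t by ring. replace (-1 * t + t) with 0 by ring. exact HH1. }
  apply is_RInt_comp_lin in HH2. apply is_RInt_opp in HH2. rewrite opp_opp in HH2.
  eapply is_RInt_ext; [|exact HH2]. intros x _. simpl.
  unfold opp, scal; simpl. unfold mult; simpl. replace (-1 * x + t) with (t - x) by ring.
  unfold opp; simpl. ring.
Qed.

Lemma gfun_derive N gamma xi eta D Rd t : 0 < gamma -> 0 < xi -> 0 < eta -> 0 < D -> 0 < Rd ->
  is_derive (gfun N gamma xi eta D Rd) t (INR N * Cbar gamma xi eta D Rd t).
Proof.
  intros. eapply is_derive_ext.
  { intros s. symmetry. apply gfun_eq; auto. }
  apply is_derive_scal. apply (is_derive_RInt (V:=R_NormedModule) _ (fun b => RInt (Cbar gamma xi eta D Rd) 0 b) 0).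
  - apply filter_forall. intros b. apply (RInt_correct (V:=R_CompleteNormedModule)), Cbar_ex; auto.
  - apply Cbar_cont; auto.
Qed.

Lemma exp_sq u : 0 <= u -> u^2 <= 4 * exp u.
Proof.
  intros Hu.
  assert (He : exp u = exp (u/2) ^ 2).
  { simpl. rewrite Rmult_1_r, <- !exp_plus. f_equal. field. }
  rewrite He. pose proof (exp_ineq1_le (u/2)).
  assert (0 <= u/2) by lra.
  assert ((u/2)^2 <= exp (u/2) ^2) by (apply pow_incr; lra).
  replace (u^2) with (4 * (u/2)^2) by field. lra.
Qed.

Lemma Cbar_pos gamma xi eta D Rd z : 0 < gamma -> 0 < xi -> 0 < eta -> 0 < D -> 0 < Rd ->
  0 < z -> 0 < Cbar gamma xi eta D Rd z.
Proof.
  intros. unfold Cbar. destruct (Rlt_dec 0 z); [|lra].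
  apply Rdiv_lt_0_compat.
  - repeat apply Rmult_lt_0_compat; try lra; try (apply pow_lt; lra). apply exp_pos.
  - repeat apply Rmult_lt_0_compat; try lra; apply pow_lt; lra.
Qed.

Lemma Cbar_nonneg gamma xi eta D Rd z : 0 < gamma -> 0 < xi -> 0 < eta -> 0 < D -> 0 < Rd ->
  0 <= Cbar gamma xi eta D Rd z.
Proof.
  intros. destruct (Rlt_dec 0 z).
  - apply Rlt_le, Cbar_pos; auto.
  - unfold Cbar. destruct (Rlt_dec 0 z); [contradiction|lra].
Qed.

Lemma Cbar_exp gamma xi eta D Rd z : 0 < gamma -> 0 < xi -> 0 < eta -> 0 < D -> 0 < Rd ->
  0 < z -> Cbar gamma xi eta D Rd z <= 8 * gamma * xi / Rd ^ 2 * exp (- eta * z).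
Proof.
  intros Hg Hx He HD HR Hz. unfold Cbar. destruct (Rlt_dec 0 z) as [_|]; [|lra].
  set (u := Rd^2/(4*z*D)).
  assert (Hu : 0 < u) by (unfold u; apply Rdiv_lt_0_compat; [nra| nra]).
  assert (HE : exp (- Rd ^ 2 / (4 * z * D) - eta * z) <= 64 * z^2 * D^2 / Rd^4 * exp (- eta * z)).
  { replace (- Rd ^ 2 / (4 * z * D) - eta * z) with (- u + - eta * z) by (unfold u; field; lra).
    rewrite exp_plus, exp_Ropp.
    pose proof (exp_sq u (Rlt_le _ _ Hu)).
    assert (0 < exp u) by apply exp_pos.
    assert (0 < exp (-eta*z)) by apply exp_pos.
    assert (/ exp u <= 4 / u^2).
    { apply (Rmult_le_reg_l (exp u * u^2)). apply Rmult_lt_0_compat; [lra| apply pow_lt; lra].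
      field_simplify; try lra. }
    assert (4 / u^2 = 64 * z^2 * D^2 / Rd^4) by (unfold u; field; lra).
    apply Rmult_le_compat_r; lra. }
  replace (gamma * xi * Rd ^ 2 * exp (- Rd ^ 2 / (4 * z * D) - eta * z) / (8 * z ^ 2 * D ^ 2))
      with ((gamma * xi * Rd ^ 2 / (8 * z ^ 2 * D ^ 2)) * exp (- Rd ^ 2 / (4 * z * D) - eta * z)) by (field; lra).
  replace (8 * gamma * xi / Rd ^ 2 * exp (- eta * z)) with ((gamma * xi * Rd ^ 2 / (8 * z ^ 2 * D ^ 2)) * (64 * z^2 * D^2 / Rd^4 * exp (- eta * z))) by (field; lra).
  apply Rmult_le_compat_l; [|exact HE].
  apply Rlt_le, Rdiv_lt_0_compat. repeat apply Rmult_lt_0_compat; try lra; apply pow_lt; lra.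
  repeat apply Rmult_lt_0_compat; try lra; apply pow_lt; lra.
Qed.

Lemma G_upper gamma xi eta D Rd t : 0 < gamma -> 0 < xi -> 0 < eta -> 0 < D -> 0 < Rd ->
  0 <= t -> RInt (Cbar gamma xi eta D Rd) 0 t <= 8 * gamma * xi / Rd ^ 2 / eta.
Proof.
  intros Hg Hx He HD HR Ht.
  set (M := 8 * gamma * xi / Rd ^ 2).
  assert (HM : 0 < M) by (unfold M; apply Rdiv_lt_0_compat; [nra| apply pow_lt; lra]).
  assert (HI : is_RInt (fun s => M * exp (- eta * s)) 0 t
                 (minus (- M / eta * exp (- eta * t)) (- M / eta * exp (- eta * 0)))).
  { apply (is_RInt_derive (V:=R_CompleteNormedModule) (fun s => - M / eta * exp (- eta * s))).
    - intros x _. auto_derive; auto. field. lra.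
    - intros x _. apply (ex_derive_continuous (K:=R_AbsRing) (V:=R_NormedModule)). auto_derive; auto. }
  apply Rle_trans with (RInt (fun s => M * exp (- eta * s)) 0 t).
  - apply RInt_le; auto.
    + apply Cbar_ex; auto.
    + eexists; exact HI.
    + intros x Hxx. apply Cbar_exp; auto. lra.
  - rewrite (is_RInt_unique (V:=R_CompleteNormedModule) _ _ _ _ HI).
    unfold minus, plus, opp; simpl. replace (- eta * 0) with 0 by ring. rewrite exp_0.
    assert (0 < exp (- eta * t)) by apply exp_pos.
    assert (0 < M / eta) by (apply Rdiv_lt_0_compat; lra).
    unfold Rdiv in *. nra.
Qed.

Lemma G_lower gamma xi eta D Rd tbar t : 0 < gamma -> 0 < xi -> 0 < eta -> 0 < D -> 0 < Rd ->
  0 < tbar -> tbar <= t ->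
  0 < RInt (Cbar gamma xi eta D Rd) 0 tbar <= RInt (Cbar gamma xi eta D Rd) 0 t.
Proof.
  intros Hg Hx He HD HR Htb Ht. split.
  - apply RInt_gt_0; auto.
    + intros x Hxx. apply Cbar_pos; auto; lra.
    + intros x _. apply Cbar_cont; auto.
  - rewrite <- (RInt_Chasles (V:=R_CompleteNormedModule) _ 0 tbar t) by (apply Cbar_ex; auto).
    assert (0 <= RInt (Cbar gamma xi eta D Rd) tbar t).
    { apply RInt_ge_0; auto. apply Cbar_ex; auto. intros. apply Cbar_nonneg; auto. }
    unfold plus; simpl. lra.
Qed.

Lemma alg_deriv g g0 g1 d beta eps k3 V X : 0 < g0 -> g0 <= g -> g <= g1 -> 0 <= d -> 0 < beta ->
  0 < eps -> eps <= beta / g1 -> eps * beta * g1 <= g0 -> k3 <= beta / (2 * g1) -> k3 <= eps * g0 / 2 ->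
  - d / g ^ 2 * V ^ 2 + (2 * V * / g + eps * X) * (- beta * V - g * X) + (2 * X + eps * V) * V
    <= - k3 * (V ^ 2 + X ^ 2).
Proof.
  intros H0 Hg Hg1 Hd Hb He He1 He2 Hk1 Hk2.
  set (p := / g). set (q := / g1).
  assert (Hq : 0 < q) by (unfold q; apply Rinv_0_lt_compat; lra).
  assert (Hpq : q <= p) by (unfold p, q; apply Rinv_le_contravar; lra).
  assert (Hpg : p * g = 1) by (unfold p; field; lra).
  assert (Hqg : q * g1 = 1) by (unfold q; field; lra).
  assert (Hdg : - d / g ^ 2 * V ^ 2 <= 0).
  { assert (0 <= d / g ^ 2 * V ^ 2).
    { apply Rmult_le_pos; [apply Rdiv_le_0_compat; [lra| apply pow_lt; lra] | apply pow2_ge_0]. }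
    unfold Rdiv in *. lra. }
  clear Hd.
  assert (E1 : beta / g1 = beta * q) by (unfold q; field; lra).
  assert (E2 : beta / (2*g1) = beta * q / 2) by (unfold q; field; lra).
  rewrite E1 in He1. rewrite E2 in Hk1.
  replace ((2 * V * / g + eps * X) * (- beta * V - g * X) + (2 * X + eps * V) * V)
    with (- 2 * beta * p * V^2 + eps * V^2 - eps * beta * X * V - eps * g * X^2 - 2 * 1 * V * X + 2 * X * V).
  2:{ rewrite <- Hpg. unfold p. ring. }
  clearbody p q.
  (* AM-GM *)
  assert (Ham : - eps * beta * X * V <= beta * q / 2 * V^2 + eps^2 * beta * g1 / 2 * X^2).
  { assert (Hsq : 0 <= beta * g1 / 2 * (q * V + eps * X)^2).
    { apply Rmult_le_pos; [|apply pow2_ge_0]. assert (0 < g1) by lra. nra. }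
    assert (Eq : beta * g1 / 2 * (q * V + eps * X)^2 = beta * (q * g1) * q / 2 * V^2 + eps * beta * (q * g1) * X * V + eps^2 * beta * g1 / 2 * X^2).
    { field. }
    rewrite Eq in Hsq.
    rewrite Hqg in Hsq. lra. }
  assert (HX : eps^2 * beta * g1 / 2 * X^2 <= eps * g0 / 2 * X^2).
  { apply Rmult_le_compat_r; [apply pow2_ge_0|]. replace (eps^2*beta*g1/2) with (eps * (eps*beta*g1) / 2) by field. nra. }
  assert (HV : - 2 * beta * p * V^2 + eps * V^2 <= - beta * q * V^2).
  { assert (0 <= V^2) by apply pow2_ge_0. assert (beta*q <= beta*p) by (apply Rmult_le_compat_l; lra).
    assert ((-2*beta*p + eps + beta*q) * V^2 <= 0 * V^2) by (apply Rmult_le_compat_r; lra). lra. }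
  assert (HgX : eps * g0 * X^2 <= eps * g * X^2).
  { apply Rmult_le_compat_r; [apply pow2_ge_0|]. apply Rmult_le_compat_l; lra. }
  assert (0 <= V^2) by apply pow2_ge_0. assert (0 <= X^2) by apply pow2_ge_0.
  assert (k3 * V^2 <= beta * q / 2 * V^2) by (apply Rmult_le_compat_r; lra).
  assert (k3 * X^2 <= eps * g0 / 2 * X^2) by (apply Rmult_le_compat_r; lra).
  assert (Eq : (2 * V * p + eps * X) * (- beta * V - g * X) + (2 * X + eps * V) * V = -2*beta*p*V^2 + eps*V^2 - eps*beta*X*V - eps*g*X^2 - 2*(p*g)*V*X + 2*X*V) by ring.
  rewrite Hpg in Eq. rewrite Rplus_assoc, Eq. lra.
Qed.

Lemma alg_bounds p p0 m eps V X : 0 < m -> m <= 1 -> m <= p -> p <= p0 -> 0 < eps -> eps <= m ->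
  m / 2 * (V^2 + X^2) <= V^2 * p + X^2 + eps * V * X <= (p0 + 1 + eps) * (V^2 + X^2).
Proof.
  intros. assert (0 <= V^2) by apply pow2_ge_0. assert (0 <= X^2) by apply pow2_ge_0.
  assert (h1 : 0 <= eps * (V + X)^2) by (apply Rmult_le_pos; [lra|apply pow2_ge_0]).
  assert (h2 : 0 <= eps * (V - X)^2) by (apply Rmult_le_pos; [lra|apply pow2_ge_0]).
  assert (h3 : m * V^2 <= p * V^2) by (apply Rmult_le_compat_r; lra).
  assert (h4 : p * V^2 <= p0 * V^2) by (apply Rmult_le_compat_r; lra).
  assert (h5 : eps * X^2 <= m * X^2) by (apply Rmult_le_compat_r; lra).
  assert (h6 : eps * V^2 <= m * V^2) by (apply Rmult_le_compat_r; lra).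
  assert (h7 : m * X^2 <= 1 * X^2) by (apply Rmult_le_compat_r; lra).
  assert (h8 : 0 <= eps * V^2) by (apply Rmult_le_pos; lra).
  assert (h9 : 0 <= eps * X^2) by (apply Rmult_le_pos; lra).
  split; nra.
Qed.

Theorem theorem5p1 (N : nat) (beta gamma xi eta D Rd : R) :
  (1 <= N)%nat -> 0 < beta -> 0 < gamma -> 0 < xi -> 0 < eta -> 0 < D -> 0 < Rd ->
  forall tbar : R, 0 < tbar ->
  exists (U Ut UV UX : R -> R -> R -> R) (k1 k2 k3 : R),
    0 < k1 /\ 0 < k2 /\ 0 < k3 /\
    (forall t V X, tbar <= t ->
       is_derive (fun s => U s V X) t (Ut t V X) /\
       is_derive (fun v => U t v X) V (UV t V X) /\
       is_derive (fun x => U t V x) X (UX t V X)) /\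
    (forall t V X, tbar <= t ->
       k2 * (V ^ 2 + X ^ 2) <= U t V X <= k1 * (V ^ 2 + X ^ 2)) /\
    (forall t V X, tbar <= t ->
       Ut t V X + UV t V X * (- beta * V - gfun N gamma xi eta D Rd t * X)
         + UX t V X * V <= - k3 * (V ^ 2 + X ^ 2)).
Proof.
  intros HN Hb Hg Hx He HD HR tbar Htb.
  set (f := Cbar gamma xi eta D Rd).
  set (G := gfun N gamma xi eta D Rd).
  assert (HN1 : 1 <= INR N) by (apply (le_INR 1 N); exact HN).
  set (g0 := INR N * RInt f 0 tbar).
  set (g1 := INR N * (8 * gamma * xi / Rd ^ 2 / eta)).
  assert (Hbnd : forall t, tbar <= t -> g0 <= G t <= g1).
  { intros t Ht. unfold G. rewrite gfun_eq by auto.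
    destruct (G_lower gamma xi eta D Rd tbar t Hg Hx He HD HR Htb Ht).
    pose proof (G_upper gamma xi eta D Rd t Hg Hx He HD HR ltac:(lra)).
    unfold g0, g1, f. split; apply Rmult_le_compat_l; lra. }
  assert (Hg0 : 0 < g0).
  { unfold g0, f. destruct (G_lower gamma xi eta D Rd tbar tbar Hg Hx He HD HR Htb (Rle_refl _)).
    unfold f. nra. }
  assert (Hg01 : g0 <= g1) by (destruct (Hbnd tbar (Rle_refl _)); lra).
  assert (Hg1 : 0 < g1) by lra.
  set (m := Rmin (/ g1) 1).
  assert (Hm : 0 < m) by (unfold m; apply Rmin_pos; [apply Rinv_0_lt_compat|]; lra).
  set (eps := Rmin (Rmin (beta / g1) (g0 / (beta * g1))) m).
  assert (Heps : 0 < eps).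
  { unfold eps. apply Rmin_pos; [apply Rmin_pos|exact Hm]; apply Rdiv_lt_0_compat; nra. }
  assert (He1 : eps <= beta / g1) by (unfold eps; eapply Rle_trans; [apply Rmin_l|apply Rmin_l]).
  assert (He2' : eps <= g0 / (beta * g1)) by (unfold eps; eapply Rle_trans; [apply Rmin_l|apply Rmin_r]).
  assert (He2 : eps * beta * g1 <= g0).
  { apply (Rmult_le_compat_r (beta * g1)) in He2'; [|nra].
    replace (g0 / (beta * g1) * (beta * g1)) with g0 in He2' by (field; lra). lra. }
  assert (He3 : eps <= m) by (unfold eps; apply Rmin_r).
  set (k3 := Rmin (beta / (2 * g1)) (eps * g0 / 2)).
  exists (fun t V X => V^2 * / G t + X^2 + eps * V * X).
  exists (fun t V X => V^2 * (- (INR N * f t) / (G t) ^ 2)).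
  exists (fun t V X => 2 * V * / G t + eps * X).
  exists (fun t V X => 2 * X + eps * V).
  exists (/ g0 + 1 + eps), (m / 2), k3.
  split. { assert (0 < / g0) by (apply Rinv_0_lt_compat; lra). lra. }
  split. { lra. }
  split. { unfold k3. apply Rmin_pos; apply Rdiv_lt_0_compat; nra. }
  split; [|split].
  - intros t V X Ht. destruct (Hbnd t Ht) as [Hl Hu]. split; [|split].
    + assert (Hd := gfun_derive N gamma xi eta D Rd t Hg Hx He HD HR).
      apply is_derive_inv in Hd; [|fold G; lra].
      apply (is_derive_scal _ _ (V^2)) in Hd.
      assert (Hc : is_derive (fun _ : R => X^2 + eps*V*X) t 0) by (auto_derive; auto; ring).
      pose proof (is_derive_plus _ _ _ _ _ Hd Hc) as H'.
      match type of H' with is_derive _ _ ?l => replace (V ^ 2 * (- (INR N * f t) / G t ^ 2)) with l end.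
      2:{ unfold plus; simpl. unfold f, G. ring. }
      eapply is_derive_ext; [|exact H']. intros s. unfold plus; simpl. unfold G. ring.
    + auto_derive; auto. ring.
    + auto_derive; auto. ring.
  - intros t V X Ht. destruct (Hbnd t Ht) as [Hl Hu].
    apply alg_bounds; auto.
    + unfold m. apply Rmin_r.
    + unfold m. eapply Rle_trans; [apply Rmin_l|]. apply Rinv_le_contravar; lra.
    + apply Rinv_le_contravar; lra.
  - intros t V X Ht. destruct (Hbnd t Ht) as [Hl Hu].
    fold G.
    pose proof (alg_deriv (G t) g0 g1 (INR N * f t) beta eps k3 V X Hg0 Hl Hu) as A.
    assert (Hfd : 0 <= INR N * f t) by (apply Rmult_le_pos; [lra|apply Cbar_nonneg; auto]).
    specialize (A Hfd Hb Heps He1 He2 (Rmin_l _ _) (Rmin_r _ _)).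
    replace (V ^ 2 * (- (INR N * f t) / G t ^ 2)) with (- (INR N * f t) / G t ^ 2 * V ^ 2) by ring.
    exact A.
Qed.
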